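(* Consider $(\mathbb R^2,d_{\rm e},\mu)$ with $\mu=\lambda_1+\lambda_2$, where $\lambda_1$ is one-dimensional Lebesgue measure on the segment $A=[0,1]\times\{0\}$ and $\lambda_2$ is two-dimensional Lebesgue measure on $\mathbb R^2$. Then there exists $f\in L^1(\mu)$ with compact support such that $\{x\in\mathbb R^2:\mathcal Mf(x)=\infty\}=A$. In particular the noncentered maximal operator $\mathcal M$ does not possess the dichotomy property for this space.
   Context: $d_{\rm e}$ is the Euclidean metric. $\mathcal Mf(x)=\sup_{B\ni x}\mu(B)^{-1}\int_B|f|d\mu$, the supremum over open Euclidean balls $B$ containing $x$. $\mathcal M$ possesses the dichotomy property if for every $f$ integrable on every ball either $\mu(\{\mathcal Mf=\infty\})=0$ or $\mathcal Mf\equiv\infty$. *)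

(* Defs.v *)
From HB Require Import structures.
From mathcomp Require Import all_boot all_order all_algebra.
From mathcomp Require Import all_classical all_reals all_analysis.
Import Order.TTheory GRing.Theory Num.Theory.

Set Implicit Arguments.
Unset Strict Implicit.
Unset Printing Implicit Defensive.

Local Open Scope classical_set_scope.
Local Open Scope ring_scope.

(* The plane R^2, as the product of two copies of the real line carrying
   the Lebesgue (Borel) measurable structure used by [lebesgue_measure]. *)
Notation R2 R := (measurableTypeR R * measurableTypeR R)%type.

Section defs.
Variable R : realType.

Definition eball (c : R2 R) (r : R) : set (R2 R) :=
  [set y | (y.1 - c.1) ^+ 2 + (y.2 - c.2) ^+ 2 < r ^+ 2].

Definition is_eball (B : set (R2 R)) : Prop :=
  exists c r, 0 < r /\ B = eball c r.

Definition segA : set (R2 R) := [set x | 0 <= x.1 <= 1 /\ x.2 = 0].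

Definition emb (t : measurableTypeR R) : R2 R := (t, 0).

Lemma measurable_emb : measurable_fun [set: measurableTypeR R] emb.
Proof.
apply: measurable_fun_pair; first exact: measurable_id.
exact: measurable_cst.
Qed.

Definition lambda1_fun :=
  pushforward (mrestr (@lebesgue_measure R) (measurable_itv `[0%R, 1%R])) emb.

Definition lambda1 : {measure set (R2 R) -> \bar R}.
Proof.
refine (lambda1_fun : {measure set (R2 R) -> \bar R}).
exact: measurable_emb.
Defined.

Definition lambda2 : {measure set (R2 R) -> \bar R} :=
  ((@lebesgue_measure R) \x (@lebesgue_measure R))%E.

Definition mu : {measure set (R2 R) -> \bar R} := measure_add lambda1 lambda2.

Definition maxfun (m : {measure set (R2 R) -> \bar R}) (f : R2 R -> R)
    (x : R2 R) : \bar R :=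
  ereal_sup [set ((\int[m]_(y in B) (`|f y|)%:E) * ((fine (m B))^-1)%:E)%E
            | B in [set B | is_eball B /\ B x]].

Definition dichotomy (m : {measure set (R2 R) -> \bar R}) : Prop :=
  forall f : R2 R -> R, measurable_fun [set: R2 R] f ->
    (forall B, is_eball B -> m.-integrable B (EFin \o f)) ->
    m [set x | maxfun m f x = +oo%E] = 0%E \/ (forall x, maxfun m f x = +oo%E).

End defs.

Arguments segA R : clear implicits.

(* Main.v *)
Require Import Defs.
From HB Require Import structures.
From mathcomp Require Import all_boot all_order all_algebra.
From mathcomp Require Import all_classical all_reals all_analysis.
From mathcomp Require Import ring lra zify.
From mathcomp Require Import measurable_realfun.
Import Order.TTheory GRing.Theory Num.Theory.
Local Open Scope classical_set_scope.
Local Open Scope ring_scope.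

Section Pf.
Variable R : realType.
Local Notation P := (R2 R).

Definition E0 : set P := `[0%R,1%R] `*` `]0%R,1%R].
Definition fb (y : P) : R := \1_E0 y * (y.2 `^ (- 2^-1)).

Lemma mE0 : measurable E0.
Proof. apply: measurableX; exact: measurable_itv. Qed.

Lemma mTR_id : measurable_fun [set: measurableTypeR R] (fun x : measurableTypeR R => (x : R)).
Proof. by move=> _ Y mY; rewrite setTI. Qed.

Lemma fb_meas : measurable_fun setT fb.
Proof.
apply: measurable_realfun.measurable_funM.
  exact: measurable_realfun.measurable_indic mE0.
have h1 := measurableT_comp mTR_id (@measurable_snd _ _ (measurableTypeR R) (measurableTypeR R)).
have h2 := measurableT_comp (measurable_realfun.measurable_powR (- 2^-1)) h1.
exact: h2.
Qed.

Lemma fb_out y : ~ E0 y -> fb y = 0.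
Proof. by move=> h; rewrite /fb indicE memNset // mul0r. Qed.

Lemma fb_in y : E0 y -> fb y = (Num.sqrt y.2)^-1.
Proof.
move=> h; rewrite /fb indicE mem_set // mul1r.
have [_ /=] := h; rewrite in_itv /= => /andP[y0 _].
by rewrite powRN powR12_sqrt // ltW.
Qed.

Lemma fb_ge0 y : 0 <= fb y.
Proof.
have [h|h] := pselect (E0 y); last by rewrite fb_out.
by rewrite fb_in // invr_ge0 sqrtr_ge0.
Qed.

Lemma E0P y : E0 y <-> (0 <= y.1 <= 1 /\ 0 < y.2 <= 1).
Proof. by rewrite /E0 /= !in_itv. Qed.

Lemma mfst : measurable_fun [set: P] (fun y : P => (y.1 : R)).
Proof. exact: (measurableT_comp mTR_id (@measurable_fst _ _ (measurableTypeR R) (measurableTypeR R))). Qed.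
Lemma msnd : measurable_fun [set: P] (fun y : P => (y.2 : R)).
Proof. exact: (measurableT_comp mTR_id (@measurable_snd _ _ (measurableTypeR R) (measurableTypeR R))). Qed.

Lemma meball (c : P) (r : R) : measurable (eball c r).
Proof.
pose g := fun y : P => ((y.1 : R) - c.1) ^+ 2 + ((y.2 : R) - c.2) ^+ 2.
have mg : measurable_fun setT g.
  apply: measurable_realfun.measurable_funD; apply: measurable_realfun.measurable_funX;
  apply: measurable_realfun.measurable_funB; (try exact: mfst); (try exact: msnd); exact: measurable_cst.
have := mg measurableT _ (measurable_itv `]-oo, r ^+ 2[).
rewrite setTI; congr measurable; apply/seteqP; split => y /=; by rewrite in_itv.
Qed.

Local Notation leb := (@lebesgue_measure R).

Lemma muE (A : set P) : mu R A = (lambda1 R A + lambda2 R A)%E.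
Proof. exact: measure_addE. Qed.

Lemma l1E (A : set P) : lambda1 R A = leb (@emb R @^-1` A `&` `[0%R,1%R]).
Proof. by []. Qed.

Lemma leb_oo (a b : R) : a < b -> leb `]a, b[ = (b - a)%:E.
Proof. by move=> ab; rewrite lebesgue_measure_itv /= lte_fin ab EFinB. Qed.

Lemma leb_cc (a b : R) : a < b -> leb `[a, b] = (b - a)%:E.
Proof. by move=> ab; rewrite lebesgue_measure_itv /= lte_fin ab EFinB. Qed.

Lemma leb_oc (a b : R) : a < b -> leb `]a, b] = (b - a)%:E.
Proof. by move=> ab; rewrite lebesgue_measure_itv /= lte_fin ab EFinB. Qed.

Lemma lam2X (A B : set (measurableTypeR R)) : measurable A -> measurable B ->
  lambda2 R (A `*` B) = (leb A * leb B)%E.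
Proof. move=> mA mB; exact: product_measure1E. Qed.

Definition box (a b c d : R) : set P := `]a, b[ `*` `]c, d[.

Lemma mbox a b c d : measurable (box a b c d).
Proof. apply: measurableX; exact: measurable_itv. Qed.

Lemma lam2box a b c d : a < b -> c < d -> lambda2 R (box a b c d) = ((b - a) * (d - c))%:E.
Proof.
move=> ab cd; rewrite /box lam2X; try exact: measurable_itv.
by rewrite leb_oo // leb_oo // EFinM.
Qed.

Lemma eball_box (c : P) r y : 0 < r -> eball c r y ->
  box (c.1 - r) (c.1 + r) (c.2 - r) (c.2 + r) y.
Proof.
rewrite /eball /box /= !in_itv /= => r0 h.
move: h; set u := y.1 - c.1; set v := y.2 - c.2 => h.
have hu := sqr_ge0 u; have hv := sqr_ge0 v.
have h1 : u ^+ 2 < r ^+ 2 by lra.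
have h2 : v ^+ 2 < r ^+ 2 by lra.
have u1 : `|u| < r by rewrite -(ltr_pXn2r (n:=2)) // ?nnegrE ?ltW // real_normK ?num_real.
have v1 : `|v| < r by rewrite -(ltr_pXn2r (n:=2)) // ?nnegrE ?ltW // real_normK ?num_real.
move: u1 v1; rewrite !ltr_norml /u /v => /andP[? ?] /andP[? ?].
by repeat (apply/andP; split); lra.
Qed.

Lemma box_eball (c : P) r : 0 < r ->
  box (c.1 - r/2) (c.1 + r/2) (c.2 - r/2) (c.2 + r/2) `<=` eball c r.
Proof.
rewrite /eball /box /= => r0 y /=; rewrite !in_itv /= => -[/andP[a b] /andP[e f]].
nra.
Qed.

Lemma memb (A : set P) : measurable A -> measurable (@emb R @^-1` A `&` `[0%R, 1%R]).
Proof.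
move=> mA; apply: measurableI; last exact: measurable_itv.
have := @measurable_emb R measurableT _ mA; by rewrite setTI.
Qed.

Lemma lam1_le1 (A : set P) : measurable A -> (lambda1 R A <= 1)%E.
Proof.
move=> mA; rewrite l1E.
have h : (leb (@emb R @^-1` A `&` `[0%R, 1%R]) <= leb `[0%R, 1%R])%E.
  apply: le_measure; rewrite ?inE; [exact: memb|exact: measurable_itv|exact: subIsetr].
by apply: le_trans h _; rewrite leb_cc // subr0.
Qed.

Lemma mu_eball_lty (c : P) r : 0 < r -> (mu R (eball c r) < +oo)%E.
Proof.
move=> r0; rewrite muE.
apply: (@le_lt_trans _ _ (1 + ((c.1 + r - (c.1 - r)) * (c.2 + r - (c.2 - r)))%R%:E)%E); last by rewrite ltry.
apply: leeD; first exact: lam1_le1 (meball c r).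
have h : (lambda2 R (eball c r) <= lambda2 R (box (c.1 - r) (c.1 + r) (c.2 - r) (c.2 + r)))%E.
  apply: le_measure; rewrite ?inE; [exact: meball|exact: mbox|].
  by move=> y; apply: eball_box.
by apply: le_trans h _; rewrite lam2box //; lra.
Qed.

Lemma mu_eball_ge (c : P) r : 0 < r -> ((r ^+ 2)%:E <= mu R (eball c r))%E.
Proof.
move=> r0; rewrite muE.
apply: (@le_trans _ _ (lambda2 R (eball c r))); last first.
  by rewrite leeDr // measure_ge0.
have h : (lambda2 R (box (c.1 - r/2) (c.1 + r/2) (c.2 - r/2) (c.2 + r/2)) <= lambda2 R (eball c r))%E.
  apply: le_measure; rewrite ?inE; [exact: mbox|exact: meball|exact: box_eball].
apply: le_trans h; rewrite lam2box; [|lra|lra].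
rewrite lee_fin le_eqVlt; apply/orP; left; apply/eqP; field.
all: by [].
Qed.

Lemma geo3 : (\sum_(k <oo) ((3:R) / (2 ^ (k + 1))%:R)%:E)%E = 3%:E.
Proof.
have := @cvg_geometric_eseries_half R 3 0.
rewrite expr0 divr1 => h.
by have := cvg_lim _ h => <-.
Qed.

Definition hf : R := 2^-1.
Definition ak (k : nat) : R := (hf ^+ k.+1) ^+ 2.
Definition bk (k : nat) : R := (hf ^+ k) ^+ 2.
Definition Rk (k : nat) : set P := `[0%R, 1%R] `*` `]ak k, bk k].
Definition ck (k : nat) : R := 2 ^+ k.+1.

Lemma hf_gt0 k : 0 < hf ^+ k.
Proof. by apply: exprn_gt0; rewrite /hf invr_gt0. Qed.

Lemma hf_le1 k : hf ^+ k <= 1.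
Proof. by apply: exprn_ile1; rewrite /hf ?invr_ge0 // invf_le1 //; lra. Qed.

Lemma hf_small N : hf ^+ N <= (N.+1)%:R^-1.
Proof.
elim: N => [|N IH]; first by rewrite expr0 invr1.
rewrite exprSr.
have h1 : 0 < hf ^+ N := hf_gt0 N.
have : hf ^+ N * hf <= (N.+1)%:R^-1 * hf by rewrite ler_pM2r // /hf invr_gt0.
move/le_trans; apply.
rewrite /hf -invfM lef_pV2 ?posrE ?ltr0n ?mulr_gt0 //.
rewrite -natrM ler_nat; lia.
Qed.

Lemma exists_k (s : R) : 0 < s -> s <= 1 -> exists k, ak k < s <= bk k.
Proof.
move=> s0 s1.
have key : forall N, bk N < s -> exists k, ak k < s <= bk k.
  elim => [|N IH]; first by rewrite /bk expr0 expr1n => h; lra.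
  move=> h; have [h'|h'] := ltP (bk N) s; first exact: IH.
  by exists N; rewrite /ak h /=.
apply: (key (Num.trunc (s^-1))).
have hb : bk (Num.trunc s^-1) <= hf ^+ (Num.trunc s^-1).
  rewrite /bk; have := hf_gt0 (Num.trunc s^-1); have := hf_le1 (Num.trunc s^-1).
  set t := hf ^+ _ => *; nra.
apply: le_lt_trans hb _; apply: le_lt_trans (hf_small _) _.
rewrite -[X in _ < X]invrK ltf_pV2 ?posrE ?invr_gt0 ?ltr0n //.
exact: truncnS_gt.
Qed.

Lemma fb_le_ck k y : Rk k y -> fb y <= ck k.
Proof.
move=> hy; have hE : E0 y.
  move: hy => -[h1 h2]; apply/E0P; split; first by move: h1; rewrite /= in_itv.
  move: h2; rewrite /= in_itv /= => /andP[a b].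
  have : 0 <= ak k by rewrite /ak sqr_ge0.
  have : bk k <= 1 by rewrite /bk; have := hf_gt0 k; have := hf_le1 k; set t := hf ^+ k => *; nra.
  move=> *; apply/andP; split; lra.
rewrite fb_in //.
move: hy; rewrite /Rk /= in_itv /= => -[_ /andP[a _]].
have h0 := hf_gt0 k.+1.
have : hf ^+ k.+1 < Num.sqrt y.2.
  have e : hf ^+ k.+1 = Num.sqrt (ak k) by rewrite /ak sqrtr_sqr gtr0_norm.
  have ak0 : 0 < ak k by rewrite /ak exprn_gt0.
  by rewrite e ltr_sqrt // (lt_trans ak0 a).
move=> h; rewrite /ck.
have -> : (2 : R) ^+ k.+1 = (hf ^+ k.+1)^-1 by rewrite /hf exprVn invrK.
by apply: ltW; rewrite ltf_pV2 ?posrE // (lt_trans h0 h).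
Qed.

Lemma mRk k : measurable (Rk k).
Proof. apply: measurableX; exact: measurable_itv. Qed.

Lemma ak_ge0 k : 0 <= ak k. Proof. by rewrite /ak sqr_ge0. Qed.

Lemma ak_lt_bk k : ak k < bk k.
Proof.
rewrite /ak /bk (exprSr hf k); have := hf_gt0 k; set u := hf ^+ k => u0.
rewrite exprMn; have h1 : hf ^+ 2 < 1 by rewrite /hf expr2; lra.
have h2 : 0 < u ^+ 2 by rewrite exprn_gt0.
nra.
Qed.

Lemma muRk k : mu R (Rk k) = (bk k - ak k)%:E.
Proof.
rewrite muE l1E.
have -> : @emb R @^-1` Rk k `&` `[0%R, 1%R] = set0.
  apply/seteqP; split => // t [] [_ /=]; rewrite in_itv /= => /andP[h _].
  by have := ak_ge0 k; lra.
rewrite measure0 add0e /Rk lam2X; try exact: measurable_itv.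
by rewrite leb_cc // leb_oc ?ak_lt_bk // subr0 mul1e.
Qed.

Lemma termE k : ck k * (bk k - ak k) = 3 / (2 ^ (k + 1))%:R.
Proof.
rewrite /ck /bk /ak /hf natrX addn1 !exprVn.
have u0 : (2:R) ^+ k != 0 by rewrite expf_neq0.
rewrite !exprS; field; by rewrite u0.
Qed.

Definition hser (y : P) : \bar R := (\sum_(k <oo) (ck k * \1_(Rk k) y)%:E)%E.

Lemma mterm k : measurable_fun setT (fun y : P => (ck k * \1_(Rk k) y)%:E).
Proof.
apply/measurable_realfun.measurable_EFinP.
apply: measurable_realfun.measurable_funM; first exact: measurable_cst.
exact: measurable_realfun.measurable_indic (mRk k).
Qed.

Lemma term_ge0 k y : (0 <= (ck k * \1_(Rk k) y)%:E)%E.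
Proof. by rewrite lee_fin mulr_ge0 // /ck exprn_ge0. Qed.

Lemma int_hser : (\int[mu R]_y hser y = 3%:E)%E.
Proof.
rewrite /hser integral_nneseries //; last by move=> n y _; exact: term_ge0.
rewrite -geo3; apply: eq_eseriesr => k _.
rewrite (@integralZl_indic _ _ _ (mu R) setT measurableT (fun _ => Rk k) (ck k)) //; last exact: mRk.
rewrite integral_indic ?mRk //.
rewrite (_ : _ `&` _ = Rk k); last by apply/seteqP; split=> y // [].
  by rewrite muRk -EFinM termE.
- exact: mRk.
- by rewrite /ck ltNge exprn_ge0.
- exact: mterm.
Qed.

Lemma hser_ge0 y : (0 <= hser y)%E.
Proof. by apply: nneseries_ge0 => n _ _; exact: term_ge0. Qed.

Lemma mhser : measurable_fun setT hser.
Proof.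
have := @ge0_emeasurable_sum _ _ R setT (fun k y => (ck k * \1_(Rk k) y)%:E) xpredT.
apply => //; [by move=> k y _ _; exact: term_ge0|by move=> k _; exact: mterm].
Qed.

Lemma fb_le_hser y : ((fb y)%:E <= hser y)%E.
Proof.
have [hE|hE] := pselect (E0 y); last by rewrite fb_out // hser_ge0.
have /E0P [_ /andP[y0 y1]] := hE.
have [k /andP[a b]] := @exists_k _ y0 y1.
have hk : Rk k y.
  split; first by case/E0P: hE => h _; rewrite /= in_itv.
  by rewrite /= in_itv /= a b.
apply: le_trans (_ : (ck k * \1_(Rk k) y)%:E <= _)%E.
  by rewrite indicE mem_set // mulr1 lee_fin fb_le_ck.
rewrite /hser (nneseriesD1 (n := k)) //; last by move=> n _; exact: term_ge0.
by rewrite leeDl // nneseries_ge0 // => n _ _; exact: term_ge0.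
Qed.

Lemma fb_int : (mu R).-integrable setT (EFin \o fb).
Proof.
apply/integrableP; split; first by apply/measurable_EFinP; exact: fb_meas.
under eq_integral do rewrite /= ?gee0_abs ?ger0_norm ?lee_fin ?fb_ge0 //.
apply: (@le_lt_trans _ _ (\int[mu R]_y hser y)%E); last by rewrite int_hser ltry.
apply: ge0_le_integral => //.
- by move=> y _; rewrite lee_fin fb_ge0.
- by apply/measurable_EFinP; exact: fb_meas.
- exact: mhser.
- by move=> y _; exact: fb_le_hser.
Qed.

Lemma notE0_fb y : ~ E0 y -> fb y <= 0.
Proof. by move=> h; rewrite fb_out. Qed.

Lemma local_bound (x : P) : ~ segA R x -> exists eps : R, 0 < eps /\ exists C : R, 0 <= C /\
  forall y : P, x.1 - 2 * eps < y.1 < x.1 + 2 * eps ->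
                x.2 - 2 * eps < y.2 < x.2 + 2 * eps -> fb y <= C.
Proof.
move=> hx.
have [x2n|x2p|x20] := ltgtP (x.2 : R) 0.
- exists (- x.2 / 4); split; first lra.
  exists 0; split => // y _ /andP[_ h2].
  rewrite fb_out // => /E0P [_ /andP[h _]]; lra.
- exists (x.2 / 4); split; first lra.
  exists (Num.sqrt (x.2 / 2))^-1; split; first by rewrite invr_ge0 sqrtr_ge0.
  move=> y _ /andP[h1 _].
  have [hE|hE] := pselect (E0 y); last by rewrite fb_out // invr_ge0 sqrtr_ge0.
  rewrite fb_in //; have /E0P [_ /andP[y0 _]] := hE.
  rewrite lef_pV2 ?posrE ?sqrtr_gt0 //; last lra.
  rewrite ler_sqrt //; lra.
- have hx1 : ~ (0 <= x.1 <= 1) by move=> h; apply: hx; split.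
  have [x1n|x1p] : x.1 < 0 \/ 1 < x.1.
    case: (ltP (x.1 : R) 0) => h; first by left.
    case: (ltP 1 (x.1 : R)) => h'; first by right.
    by exfalso; apply: hx1; rewrite h h'.
  + exists (- x.1 / 4); split; first lra.
    exists 0; split => // y /andP[_ h2] _.
    rewrite fb_out // => /E0P [/andP[h _] _]; lra.
  + exists ((x.1 - 1) / 4); split; first lra.
    exists 0; split => // y /andP[h2 _] _.
    rewrite fb_out // => /E0P [/andP[_ h] _]; lra.
Qed.

Lemma mu_eball_fin (c : P) r : 0 < r -> exists m : R, mu R (eball c r) = m%:E /\ r ^+ 2 <= m.
Proof.
move=> r0; exists (fine (mu R (eball c r))).
have h1 := @mu_eball_lty c r r0; have h2 := @mu_eball_ge c r r0.
have hf : mu R (eball c r) \is a fin_num by rewrite ge0_fin_numE // measure_ge0.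
by rewrite fineK //; split => //; rewrite -lee_fin fineK.
Qed.

Lemma int_fb_fin : exists I : R, 0 <= I /\ (\int[mu R]_y (fb y)%:E)%E = I%:E.
Proof.
have /integrableP [_ h] := fb_int.
move: h; under eq_integral do rewrite /= ?gee0_abs ?ger0_norm ?lee_fin ?fb_ge0 //.
move=> h; have h0 : (0 <= \int[mu R]_y (fb y)%:E)%E.
  by apply: integral_ge0 => y _; rewrite lee_fin fb_ge0.
exists (fine (\int[mu R]_y (fb y)%:E)); rewrite fineK ?ge0_fin_numE //; split => //.
by rewrite -lee_fin fineK ?ge0_fin_numE.
Qed.

Lemma mfbE : measurable_fun setT (fun y => (fb y)%:E).
Proof. by apply/measurable_EFinP; exact: fb_meas. Qed.

Lemma maxfun_fin (x : P) : ~ segA R x -> (maxfun (mu R) fb x < +oo)%E.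
Proof.
move=> hx; have [eps [e0 [C [C0 hC]]]] := @local_bound x hx.
have [I [I0 hI]] := int_fb_fin.
apply: (@le_lt_trans _ _ (Num.max C (I / eps ^+ 2))%:E); last exact: ltry.
apply: ge_ereal_sup => z [B [[c [r [r0 ->]]] Bx] <-].
have [m [hm mr]] := @mu_eball_fin c r r0.
have m0 : 0 < m by apply: lt_le_trans mr; rewrite exprn_gt0.
rewrite hm /=.
under eq_integral do rewrite ger0_norm ?fb_ge0 //.
have mB := meball c r.
have hint0 : (0 <= \int[mu R]_(y in eball c r) (fb y)%:E)%E.
  by apply: integral_ge0 => y _; rewrite lee_fin fb_ge0.
have [rs|rl] := ltP r eps.
- have hle : (\int[mu R]_(y in eball c r) (fb y)%:E <= (C * m)%:E)%E.
    rewrite EFinM -hm -integral_cst //.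
    apply: ge0_le_integral => //.
    + by move=> y _; rewrite lee_fin fb_ge0.
    + exact: measurable_funTS mfbE.
    + move=> y By; rewrite lee_fin; apply: hC.
      * have := @eball_box c r y r0 By; have := @eball_box c r x r0 Bx.
        rewrite /box /= !in_itv /= => -[/andP[a b] _] [/andP[a' b'] _].
        apply/andP; split; lra.
      * have := @eball_box c r y r0 By; have := @eball_box c r x r0 Bx.
        rewrite /box /= !in_itv /= => -[_ /andP[a b]] [_ /andP[a' b']].
        apply/andP; split; lra.
  apply: le_trans (lee_wpmul2r _ hle) _; first by rewrite lee_fin invr_ge0 ltW.
  rewrite -EFinM lee_fin (mulfK (lt0r_neq0 m0)).
  by rewrite le_max lexx.
- have hle2 : (\int[mu R]_(y in eball c r) (fb y)%:E <= I%:E)%E.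
    rewrite -hI; apply: ge0_subset_integral => //; first exact: mfbE.
    by move=> y _; rewrite lee_fin fb_ge0.
  apply: le_trans (lee_wpmul2r _ hle2) _; first by rewrite lee_fin invr_ge0 ltW.
  rewrite -EFinM lee_fin.
  apply: le_trans (_ : I / eps ^+ 2 <= _); last by rewrite le_max lexx orbT.
  apply: ler_wpM2l => //.
  rewrite lef_pV2 ?posrE ?exprn_gt0 //.
  apply: le_trans mr; rewrite !expr2; nra.
Qed.

Lemma sup_pinfty (S : set (\bar R)) :
  (forall M : R, exists2 z, S z & (M%:E < z)%E) -> ereal_sup S = +oo%E.
Proof.
move=> h.
have h' : forall M : R, (M%:E < ereal_sup S)%E.
  move=> M; have [z Sz Mz] := h M; apply: lt_le_trans Mz _; exact: ereal_sup_ubound.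
move: h'; case: (ereal_sup S) => [r| |] // h'.
  by have := h' r; rewrite ltxx.
by have := h' 0.
Qed.

Lemma sq_lt (a b : R) : 0 < b -> a ^+ 2 < b ^+ 2 -> - b < a < b.
Proof.
move=> b0 h; have : `|a| < b by rewrite -(ltr_pXn2r (n:=2)) // ?nnegrE ?ltW // real_normK ?num_real.
by rewrite ltr_norml.
Qed.

Lemma maxfun_inf (x : P) : segA R x -> maxfun (mu R) fb x = +oo%E.
Proof.
move=> [/andP[t0 t1] x20].
apply: sup_pinfty => M.
pose K : R := 40 * (`|M| + 1).
have K1 : 1 <= K by rewrite /K; have := normr_ge0 M; lra.
have K0 : 0 < K by lra.
pose r : R := (K ^+ 2)^-1 / 4.
have K2 : 1 <= K ^+ 2 by rewrite expr2; nra.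
have iK0 : 0 < (K ^+ 2)^-1 by rewrite invr_gt0 exprn_gt0.
have iK1 : (K ^+ 2)^-1 <= 1 by rewrite invf_le1 // exprn_gt0.
have r0 : 0 < r by rewrite /r; lra.
have r1 : r <= 4^-1 by rewrite /r; lra.
pose rho : R := r + r ^+ 3.
have r3 : 0 <= r ^+ 3 <= r ^+ 2 * 4^-1.
  by rewrite !exprS expr0 !mulr1; apply/andP; split; nra.
have rho0 : 0 < rho by rewrite /rho; lra.
have rhor : r <= rho <= 2 * r by rewrite /rho; apply/andP; split; nra.
pose c : P := (x.1, r).
have Bx : eball c rho x.
  rewrite /eball /= x20 subrr expr0n /= add0r sub0r sqrrN !expr2.
  have : r < rho by rewrite /rho; have := exprn_gt0 3 r0; lra.
  nra.
set B := eball c rho.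
exists (\int[mu R]_(y in B) `|fb y|%:E * ((fine (mu R B))^-1)%:E)%E.
  exists B => //; split => //; exists c, rho; split => //.
have [m [hm mr]] := @mu_eball_fin c rho rho0.
have m0 : 0 < m by apply: lt_le_trans mr; rewrite exprn_gt0.
rewrite hm /=.
under eq_integral do rewrite ger0_norm ?fb_ge0 //.
have mle : m <= 20 * r ^+ 2.
  have e : rho ^+ 2 - r ^+ 2 <= (2 * r ^+ 2) ^+ 2.
    rewrite /rho; have r4 : 0 <= r ^+ 4 by rewrite exprn_ge0 ?ltW.
    have r22 : r ^+ 2 <= 2 by rewrite expr2; nra.
    have r22' : 0 <= 2 - r ^+ 2 by rewrite subr_ge0.
    have h := mulr_ge0 r4 r22'.
    have -> : (r + r ^+ 3) ^+ 2 - r ^+ 2 = 2 * r ^+ 4 + r ^+ 4 * r ^+ 2 by ring.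
    have -> : (2 * r ^+ 2) ^+ 2 = 4 * r ^+ 4 by ring.
    move: h; rewrite mulrBr; lra.
  have h1 : (lambda1 R B <= (4 * r ^+ 2)%:E)%E.
    rewrite l1E.
    have <- : leb `](x.1 : R) - 2 * r ^+ 2, (x.1 : R) + 2 * r ^+ 2[ = (4 * r ^+ 2)%:E.
      by rewrite leb_oo; [congr EFin; ring | have := exprn_gt0 2 r0; lra].
    apply: le_measure; rewrite ?inE; [exact: memb (meball c rho)|exact: measurable_itv|].
    move=> t [] /=; rewrite /B /eball /= => ht _.
    have ht' : (t - x.1) ^+ 2 < (2 * r ^+ 2) ^+ 2.
      have : (0 - r) ^+ 2 = r ^+ 2 by rewrite sub0r sqrrN.
      lra.
    have := @sq_lt _ _ (mulr_gt0 (ltr0n _ 2) (exprn_gt0 2 r0)) ht'.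
    by rewrite in_itv /= => /andP[a b]; apply/andP; split; lra.
  have h2 : (lambda2 R B <= (4 * rho ^+ 2)%:E)%E.
    have hb : (lambda2 R B <= lambda2 R (box (c.1 - rho) (c.1 + rho) (c.2 - rho) (c.2 + rho)))%E.
      apply: le_measure; rewrite ?inE; [exact: meball|exact: mbox|].
      by move=> y; apply: eball_box.
    apply: le_trans hb _; rewrite lam2box; [|lra|lra].
    by rewrite lee_fin le_eqVlt; apply/orP; left; apply/eqP; ring.
  have : (m%:E <= (4 * r ^+ 2 + 4 * rho ^+ 2)%:E)%E.
    by rewrite -hm muE EFinD leeD.
  rewrite lee_fin; move: rhor => /andP[_ h3].
  have : rho ^+ 2 <= (2 * r) ^+ 2 by rewrite !expr2; nra.
  lra.
have [a [a0 [a1 [ax1 ax2]]]] : exists a : R, 0 <= a /\ a + r / 2 <= 1 /\ a <= x.1 /\ x.1 <= a + r / 2.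
  have [th|th] := leP (x.1 : R) (2^-1).
    by exists x.1; split => //; split; [lra|split; lra].
  by exists (x.1 - r / 2); split; [lra|split; [lra|split; lra]].
pose S := box a (a + r / 2) (r / 2) (3 * r / 2).
have SB : S `<=` B.
  rewrite /S /box /B /eball /= => y [] /=; rewrite !in_itv /= => /andP[y1 y2] /andP[y3 y4].
  have e1 : (y.1 - x.1) ^+ 2 < (r / 2) ^+ 2.
    have : - (r / 2) < y.1 - x.1 < r / 2 by apply/andP; split; lra.
    set u := y.1 - x.1 => /andP[u1 u2]; rewrite !expr2; nra.
  have e2 : (y.2 - r) ^+ 2 < (r / 2) ^+ 2.
    have : - (r / 2) < y.2 - r < r / 2 by apply/andP; split; lra.
    set u := y.2 - r => /andP[u1 u2]; rewrite !expr2; nra.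
  have e3 : (r / 2) ^+ 2 + (r / 2) ^+ 2 < rho ^+ 2.
    move: rhor => /andP[h _]; rewrite !expr2; nra.
  lra.
have fS : forall y, S y -> K <= fb y.
  rewrite /S /box => y [] /=; rewrite !in_itv /= => /andP[y1 y2] /andP[y3 y4].
  have y20 : 0 < y.2 by lra.
  rewrite fb_in; last by apply/E0P; split; apply/andP; split; lra.
  rewrite -[K]invrK lef_pV2 ?posrE ?invr_gt0 ?sqrtr_gt0 //.
  have -> : K^-1 = Num.sqrt (K^-1 ^+ 2) by rewrite sqrtr_sqr gtr0_norm // invr_gt0.
  rewrite ler_sqrt; last by rewrite exprn_ge0 // invr_ge0 ltW.
  by rewrite exprVn; rewrite /r in y4; lra.
have hint : ((K * (r / 2 * r))%:E <= \int[mu R]_(y in B) (fb y)%:E)%E.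
  have mS : measurable S by exact: mbox.
  apply: le_trans (_ : \int[mu R]_(y in S) (fb y)%:E <= _)%E; last first.
    apply: ge0_subset_integral => //.
    - exact: meball.
    - exact: measurable_funTS mfbE.
    - by move=> z _; rewrite lee_fin fb_ge0.
  apply: le_trans (_ : \int[mu R]_(y in S) (cst K%:E) y <= _)%E; last first.
    apply: ge0_le_integral => //.
    - by move=> z _; rewrite lee_fin ltW.
    - exact: measurable_funTS mfbE.
  rewrite (integral_cst _ mS) EFinM lee_pmul2l ?lte_fin //.
  rewrite muE; apply: le_trans (_ : lambda2 R S <= _)%E; last by rewrite leeDr // measure_ge0.
  rewrite /S lam2box; [|lra|lra].
  by rewrite lee_fin le_eqVlt; apply/orP; left; apply/eqP; field.
apply: lt_le_trans (lee_wpmul2r _ hint); last by rewrite lee_fin invr_ge0 ltW.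
rewrite -EFinM lte_fin ltr_pdivlMr //.
have hM : M * m <= `|M| * m by rewrite ler_pM2r // real_ler_norm ?num_real.
have hM0 := normr_ge0 M.
have r2 : 0 < r ^+ 2 by rewrite exprn_gt0.
rewrite /K; rewrite expr2 in mle r2; nra.
Qed.

Lemma maxfun_set : [set x | maxfun (mu R) fb x = +oo%E] = segA R.
Proof.
apply/seteqP; split => x /=.
  move=> h; apply: contrapT => hx.
  by have := @maxfun_fin x hx; rewrite h ltxx.
exact: maxfun_inf.
Qed.

End Pf.

Theorem mainTheorem20 (R : realType) :
  (exists f : R2 R -> R,
      measurable_fun [set: R2 R] f /\
      (mu R).-integrable [set: R2 R] (EFin \o f) /\
      (exists K : set (R^o * R^o)%type, compact K /\
         (forall x : R2 R, f x != 0 -> K x)) /\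
      [set x | maxfun (mu R) f x = +oo%E] = segA R)
  /\ ~ dichotomy (mu R).
Proof.
split.
  exists (@fb R); split; first exact: fb_meas.
  split; first exact: fb_int.
  split; last exact: maxfun_set.
  exists (`[0%R, 1%R] `*` `[0%R, 1%R]); split.
    by apply: compact_setX; exact: segment_compact.
  move=> x; have [hE|hE] := pselect (@E0 R x); last by rewrite fb_out ?eqxx.
  move=> _; case/E0P: hE => h1 /andP[h2 h3]; split => /=; rewrite in_itv //=.
  by rewrite h3 andbT ltW.
move=> H.
have fint : forall B, is_eball B -> (mu R).-integrable B (EFin \o @fb R).
  move=> B [c [r [r0 ->]]]; apply: integrableS (fb_int R) => //; exact: meball.
case: (H _ (@fb_meas R) fint) => [h|h].
  move: h; rewrite maxfun_set muE.
  have -> : lambda1 R (segA R) = 1%E.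
    rewrite l1E (_ : _ `&` _ = [set` `[0%R, 1%R]]); first by rewrite leb_cc // subr0.
    apply/seteqP; split => t; first by case.
    move=> ht; split => //; split => //; by move: ht; rewrite /= in_itv.
  move=> h; have : (1 <= 1 + lambda2 R (segA R))%E by rewrite leeDl // measure_ge0.
  by rewrite h lee_fin ler10.
have := h ((2 : R), (2 : R)) .
have : ~ segA R ((2 : R), (2 : R)) by case => /= /andP[_ h2]; lra.
move/maxfun_fin => h1 h2; by move: h1; rewrite h2 ltxx.
Qed.
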